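(* The category of local homomorphisms is complete: every functor from a small category into it has a limit.
   Context: Rings are associative with $1$, and the zero ring $\{0\}$ (in which $1=0$) is considered a ring. A ring homomorphism $f:B\to A$ is called local if every square matrix $\alpha$ with entries in $B$ such that $f(\alpha)$ is invertible is itself invertible. The category of local homomorphisms has as objects the local ring homomorphisms $f:B\to A$, and a morphism from $f:B\to A$ to $f':B'\to A'$ is a pair of ring homomorphisms $g:B\to B'$, $h:A\to A'$ with $f'g=hf$ (a commutative square), composed componentwise. *)

(* Defs.v *)
(* Rings = pzRingType (associative, with 1, zero ring allowed). *)
From HB Require Import structures.
From mathcomp Require Import all_boot all_algebra.
Set Implicit Arguments. Unset Strict Implicit. Unset Printing Implicit Defensive.
Import GRing.Theory.
Local Open Scope ring_scope.

Definition mx_invertible (R : pzRingType) (n : nat) (M : 'M[R]_n) : Prop :=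
  exists N : 'M[R]_n, M *m N = 1%:M /\ N *m M = 1%:M.

Definition is_local (B A : pzRingType) (f : {rmorphism B -> A}) : Prop :=
  forall (n : nat) (M : 'M[B]_n), mx_invertible (map_mx f M) -> mx_invertible M.

Record lhom := LHom {
  lh_dom : pzRingType;
  lh_cod : pzRingType;
  lh_map : {rmorphism lh_dom -> lh_cod};
  lh_local : is_local lh_map }.

Record lmor (X Y : lhom) := LMor {
  lm_g : {rmorphism lh_dom X -> lh_dom Y};
  lm_h : {rmorphism lh_cod X -> lh_cod Y};
  lm_square : forall b, lh_map Y (lm_g b) = lm_h (lh_map X b) }.

Definition lmor_eq (X Y : lhom) (m m' : lmor X Y) : Prop :=
  lm_g m =1 lm_g m' /\ lm_h m =1 lm_h m'.

Definition lmor_is_id (X : lhom) (m : lmor X X) : Prop :=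
  lm_g m =1 id /\ lm_h m =1 id.

Definition lmor_is_comp (X Y Z : lhom) (m : lmor X Z) (g : lmor Y Z)
  (f : lmor X Y) : Prop :=
  (forall x, lm_g m x = lm_g g (lm_g f x)) /\
  (forall x, lm_h m x = lm_h g (lm_h f x)).

Record small_cat := SmallCat {
  Ob : Type;
  Hom : Ob -> Ob -> Type;
  idm : forall a, Hom a a;
  cmp : forall a b c, Hom b c -> Hom a b -> Hom a c;
  cmp_id_l : forall a b (f : Hom a b), cmp (idm b) f = f;
  cmp_id_r : forall a b (f : Hom a b), cmp f (idm a) = f;
  cmp_assoc : forall a b c d (h : Hom c d) (g : Hom b c) (f : Hom a b),
      cmp h (cmp g f) = cmp (cmp h g) f }.
Arguments idm {s} a.
Arguments cmp {s a b c}.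

Record lfunctor (J : small_cat) := LFunctor {
  Fo : Ob J -> lhom;
  Fm : forall a b : Ob J, Hom a b -> lmor (Fo a) (Fo b);
  Fm_id : forall a, lmor_is_id (Fm (idm a));
  Fm_comp : forall a b c (g : Hom b c) (f : Hom a b),
      lmor_is_comp (Fm (cmp g f)) (Fm g) (Fm f) }.
Arguments Fm {J} l {a b}.

Definition is_cone (J : small_cat) (F : lfunctor J) (L : lhom)
  (p : forall j : Ob J, lmor L (Fo F j)) : Prop :=
  forall (a b : Ob J) (f : Hom a b), lmor_is_comp (p b) (Fm F f) (p a).

Definition is_limit (J : small_cat) (F : lfunctor J) (L : lhom)
  (p : forall j : Ob J, lmor L (Fo F j)) : Prop :=
  is_cone p /\
  forall (X : lhom) (q : forall j : Ob J, lmor X (Fo F j)), is_cone q ->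
    exists u : lmor X L,
      (forall j, lmor_is_comp (q j) (p j) u) /\
      (forall u' : lmor X L, (forall j, lmor_is_comp (q j) (p j) u') ->
         lmor_eq u u').

(* Main.v *)
Require Import Defs.
From HB Require Import structures.
From mathcomp Require Import all_boot all_algebra.
From mathcomp Require Import boolp.
Set Implicit Arguments. Unset Strict Implicit. Unset Printing Implicit Defensive.
Import GRing.Theory.
Local Open Scope ring_scope.

Section Lim.
Variables (I : Type) (H : I -> I -> Type) (R : I -> pzRingType)
  (psi : forall a b, H a b -> {rmorphism R a -> R b}).
Definition compat (x : forall i, R i) := forall a b (f : H a b), psi f (x a) = x b.
Definition limT := {x : forall i, R i | compat x}.
HB.instance Definition _ := gen_eqMixin limT.
HB.instance Definition _ := gen_choiceMixin limT.

Lemma limT_eq (x y : limT) : (forall i, sval x i = sval y i) -> x = y.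
Proof.
case: x => x px; case: y => y py /= e.
have exy : x = y by apply: functional_extensionality_dep.
subst y; congr exist; apply: Prop_irrelevance.
Qed.

Definition lzero : limT := @exist _ compat (fun i => 0) (fun a b f => rmorph0 _).
Definition lone : limT := @exist _ compat (fun i => 1) (fun a b f => rmorph1 _).
Program Definition ladd (x y : limT) : limT := exist _ (fun i => sval x i + sval y i) _.
Next Obligation. by move=> a b f; rewrite rmorphD (proj2_sig x) (proj2_sig y). Qed.
Program Definition lopp (x : limT) : limT := exist _ (fun i => - sval x i) _.
Next Obligation. by move=> a b f; rewrite rmorphN (proj2_sig x). Qed.
Program Definition lmul (x y : limT) : limT := exist _ (fun i => sval x i * sval y i) _.
Next Obligation. by move=> a b f; rewrite rmorphM (proj2_sig x) (proj2_sig y). Qed.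

Lemma laddA : associative ladd. Proof. by move=> x y z; apply: limT_eq => i /=; rewrite addrA. Qed.
Lemma laddC : commutative ladd. Proof. by move=> x y; apply: limT_eq => i /=; rewrite addrC. Qed.
Lemma ladd0 : left_id lzero ladd. Proof. by move=> x; apply: limT_eq => i /=; rewrite add0r. Qed.
Lemma laddN : left_inverse lzero lopp ladd. Proof. by move=> x; apply: limT_eq => i /=; rewrite addNr. Qed.
Lemma lmulA : associative lmul. Proof. by move=> x y z; apply: limT_eq => i /=; rewrite mulrA. Qed.
Lemma lmul1 : left_id lone lmul. Proof. by move=> x; apply: limT_eq => i /=; rewrite mul1r. Qed.
Lemma lmulr1 : right_id lone lmul. Proof. by move=> x; apply: limT_eq => i /=; rewrite mulr1. Qed.
Lemma lmulDl : left_distributive lmul ladd. Proof. by move=> x y z; apply: limT_eq => i /=; rewrite mulrDl. Qed.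
Lemma lmulDr : right_distributive lmul ladd. Proof. by move=> x y z; apply: limT_eq => i /=; rewrite mulrDr. Qed.

HB.instance Definition _ := GRing.isPzRing.Build limT laddA laddC ladd0 laddN lmulA lmul1 lmulr1 lmulDl lmulDr.

Definition lproj (i : I) (x : limT) : R i := sval x i.
Lemma lproj_nmod i : nmod_morphism (lproj i). Proof. by split. Qed.
Lemma lproj_mon i : monoid_morphism (lproj i). Proof. by split. Qed.
HB.instance Definition _ i := GRing.isNmodMorphism.Build limT (R i) (lproj i) (lproj_nmod i).
HB.instance Definition _ i := GRing.isMonoidMorphism.Build limT (R i) (lproj i) (lproj_mon i).
Section Lift.
Variables (S : pzRingType) (h : forall i, {rmorphism S -> R i})
  (hc : forall a b (f : H a b) s, psi f (h a s) = h b s).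
Definition lift (s : S) : limT := @exist _ compat (fun i => h i s) (fun a b f => hc f s).
Lemma lift_nmod : nmod_morphism lift.
Proof. by split; [apply: limT_eq => i /=; rewrite rmorph0 | move=> x y; apply: limT_eq => i /=; rewrite rmorphD]. Qed.
Lemma lift_mon : monoid_morphism lift.
Proof. by split; [apply: limT_eq => i /=; rewrite rmorph1 | move=> x y; apply: limT_eq => i /=; rewrite rmorphM]. Qed.
HB.instance Definition _ := GRing.isNmodMorphism.Build S limT lift lift_nmod.
HB.instance Definition _ := GRing.isMonoidMorphism.Build S limT lift lift_mon.
End Lift.
End Lim.
Section Main.
Variables (J : small_cat) (F : lfunctor J).
Definition LB := @limT (Ob J) (@Defs.Hom J) (fun j => lh_dom (Fo F j)) (fun a b f => lm_g (Fm F f)).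
Definition LA := @limT (Ob J) (@Defs.Hom J) (fun j => lh_cod (Fo F j)) (fun a b f => lm_h (Fm F f)).
Definition lmh j : {rmorphism LB -> lh_cod (Fo F j)} := (lh_map (Fo F j) \o @lproj _ _ _ (fun a b f => lm_g (Fm F f)) j)%FUN.
Lemma lmh_c a b (f : Defs.Hom a b) s : lm_h (Fm F f) (lmh a s) = lmh b s.
Proof. rewrite /lmh /= -lm_square; congr (lh_map _ _); exact: (proj2_sig s). Qed.
Definition lmap : {rmorphism LB -> LA} := lift lmh_c.
Definition pB j : {rmorphism LB -> lh_dom (Fo F j)} := @lproj _ _ _ (fun a b f => lm_g (Fm F f)) j.
Definition pA j : {rmorphism LA -> lh_cod (Fo F j)} := @lproj _ _ _ (fun a b f => lm_h (Fm F f)) j.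

Lemma inv_uniq (R : pzRingType) n (M N1 N2 : 'M[R]_n) :
  M *m N1 = 1%:M -> N2 *m M = 1%:M -> N1 = N2.
Proof. by move=> h1 h2; rewrite -[N1]mul1mx -h2 -mulmxA h1 mulmx1. Qed.

Lemma lmap_local : is_local lmap.
Proof.
move=> n M [N [h1 h2]].
have inv_j j : mx_invertible (map_mx (lh_map (Fo F j)) (map_mx (pB j) M)).
  have e : map_mx (lh_map (Fo F j)) (map_mx (pB j) M) = map_mx (pA j) (map_mx lmap M).
    by apply/matrixP => i k; rewrite !mxE.
  rewrite e; exists (map_mx (pA j) N).
  by rewrite -!map_mxM h1 h2 !map_mx1.
pose Nj j := sval (cid (lh_local (inv_j j))).
have hNj j : map_mx (pB j) M *m Nj j = 1%:M /\ Nj j *m map_mx (pB j) M = 1%:M.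
  exact: (svalP (cid (lh_local (inv_j j)))).
have cmp a b (f : Defs.Hom a b) : map_mx (lm_g (Fm F f)) (Nj a) = Nj b.
  have eM : map_mx (lm_g (Fm F f)) (map_mx (pB a) M) = map_mx (pB b) M.
    by apply/matrixP => i k; rewrite !mxE /=; exact: (proj2_sig (M i k)).
  apply: (@inv_uniq _ _ (map_mx (pB b) M)); last by case: (hNj b).
  by rewrite -eM -map_mxM (proj1 (hNj a)) map_mx1.
have cmpE i k a b (f : Defs.Hom a b) : lm_g (Fm F f) (Nj a i k) = Nj b i k.
  by rewrite -(cmp a b f) mxE.
pose N' := \matrix_(i, k) (@exist _ (compat (fun a b f => lm_g (Fm F f)))
     (fun j => Nj j i k) (cmpE i k) : LB).
have eN j : map_mx (pB j) N' = Nj j by apply/matrixP => i k; rewrite !mxE.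
have one j i k : pB j ((1%:M : 'M[LB]_n) i k) = (1%:M : 'M_n) i k.
  by have := congr1 (fun X : 'M[_]_n => X i k) (@map_mx1 _ _ (pB j) n); rewrite mxE.
exists N'; split; apply/matrixP => i k; apply: limT_eq => j.
- change (pB j ((M *m N') i k) = pB j ((1%:M : 'M[LB]_n) i k)).
  by rewrite one -(proj1 (hNj j)) -eN -map_mxM [in RHS]mxE.
- change (pB j ((N' *m M) i k) = pB j ((1%:M : 'M[LB]_n) i k)).
  by rewrite one -(proj2 (hNj j)) -eN -map_mxM [in RHS]mxE.
Qed.
Definition Llim : lhom := @LHom LB LA lmap lmap_local.
Definition pm j : lmor Llim (Fo F j) := @LMor Llim (Fo F j) (pB j) (pA j) (fun b => erefl).

Lemma pm_cone : is_cone pm.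
Proof.
move=> a b f; split => x /=; rewrite /pB /pA /lproj; symmetry; exact: (proj2_sig x).
Qed.

Section Univ.
Variables (X : lhom) (q : forall j, lmor X (Fo F j)) (hq : is_cone q).
Lemma hcg a b (f : Defs.Hom a b) s : lm_g (Fm F f) (lm_g (q a) s) = lm_g (q b) s.
Proof. by rewrite ((hq f).1 s). Qed.
Lemma hch a b (f : Defs.Hom a b) s : lm_h (Fm F f) (lm_h (q a) s) = lm_h (q b) s.
Proof. by rewrite ((hq f).2 s). Qed.
Definition ug : {rmorphism lh_dom X -> LB} := lift hcg.
Definition uh : {rmorphism lh_cod X -> LA} := lift hch.
Lemma usq b : lh_map Llim (ug b) = uh (lh_map X b).
Proof. by apply: limT_eq => j /=; rewrite lm_square. Qed.
Definition um : lmor X Llim := @LMor X Llim ug uh usq.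
End Univ.
End Main.

Theorem lemma2p5 (J : small_cat) (F : lfunctor J) :
  exists (L : lhom) (p : forall j : Ob J, lmor L (Fo F j)), is_limit p.
Proof.
exists (Llim F), (@pm J F); split; first exact: pm_cone.
move=> X q hq; exists (um hq); split.
  by move=> j; split => x.
move=> u' hu; split => x; apply: limT_eq => j /=.
- exact: (hu j).1 x.
- exact: (hu j).2 x.
Qed.
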